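(* CTL*$_{cd}$ is invariant under cycle-bisimulation: if $\mathcal K_1=(AP,W_1,R_1,L_1,w_{I,1})$ and $\mathcal K_2=(AP,W_2,R_2,L_2,w_{I,2})$ are Kripke structures and $B\subseteq W_1\times W_2$ is a cycle-bisimulation relation, then for every CTL*$_{cd}$ state formula $\varphi$ and every $(w_1,w_2)\in B$ we have $\mathcal K_1,w_1\models\varphi$ iff $\mathcal K_2,w_2\models\varphi$; in particular $\mathcal K_1\models\varphi$ iff $\mathcal K_2\models\varphi$.
   Context: A Kripke structure over a finite set $AP$ of atomic propositions is a tuple $\mathcal K=(AP,W,R,L,w_I)$ where $W$ is a countable non-empty set of worlds, $w_I\in W$ is the initial world, $R\subseteq W\times W$ is a left-total transition relation (every world has at least one $R$-successor), and $L:W\to 2^{AP}$ is a labelling function. A path is an infinite sequence $\pi=\pi_0\pi_1\cdots$ of worlds with $(\pi_i,\pi_{i+1})\in R$ for all $i\in\mathbb N$; $\mathrm{Pth}(w)$ is the set of paths with $\pi_0=w$. A path $\pi$ is a cycle if for every $i\in\mathbb N$ there is $j>i$ with $\pi_j=\pi_0$ (i.e. $\pi_0$ occurs infinitely often in $\pi$); $\mathrm{Cyc}(w)$ is the set of cycles with $\pi_0=w$. Syntax of CTL*$_{cd}$: state formulas $\varphi::=p\mid\neg\varphi\mid\varphi\wedge\varphi\mid\varphi\vee\varphi\mid \mathsf E\psi\mid\mathsf A\psi\mid\mathsf E^{c}\psi\mid\mathsf A^{c}\psi$ with $p\in AP$; path formulas $\psi::=\varphi\mid\neg\psi\mid\psi\wedge\psi\mid\psi\vee\psi\mid\mathsf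 X\psi\mid\psi\,\mathsf U\,\psi$. Semantics: $\mathcal K,w\models p$ iff $p\in L(w)$; Boolean connectives as usual; $\mathcal K,w\models\mathsf E\psi$ iff some $\pi\in\mathrm{Pth}(w)$ has $\mathcal K,\pi,0\models\psi$; $\mathcal K,w\models\mathsf A\psi$ iff every $\pi\in\mathrm{Pth}(w)$ has $\mathcal K,\pi,0\models\psi$; $\mathcal K,w\models\mathsf E^{c}\psi$ iff some $\pi\in\mathrm{Cyc}(w)$ has $\mathcal K,\pi,0\models\psi$; $\mathcal K,w\models\mathsf A^{c}\psi$ iff every $\pi\in\mathrm{Cyc}(w)$ has $\mathcal K,\pi,0\models\psi$. For paths: $\mathcal K,\pi,i\models\varphi$ (state formula) iff $\mathcal K,\pi_i\models\varphi$; Boolean connectives as usual; $\mathcal K,\pi,i\models\mathsf X\psi$ iff $\mathcal K,\pi,i+1\models\psi$; $\mathcal K,\pi,i\models\psi_1\mathsf U\psi_2$ iff there is $k\ge0$ with $\mathcal K,\pi,i+k\models\psi_2$ and $\mathcal K,\pi,i+j\models\psi_1$ for all $0\le j<k$. $\mathcal K\models\varphi$ iff $\mathcal K,w_I\models\varphi$. A relation $B\subseteq W_1\times W_2$ is a cycle-bisimulation relation between $\mathcal K_1$ and $\mathcal K_2$ if $(w_{I,1},w_{I,2})\in B$ and for all $(w_1,w_2)\in B$: (a) $L_1(w_1)=L_2(w_2)$; (b) for every $v_1$ with $(w_1,v_1)\in R_1$ there is $v_2$ with $(w_2,v_2)\in R_2$ and $(v_1,v_2)\in B$; (c) for every $v_2$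 with $(w_2,v_2)\in R_2$ there is $v_1$ with $(w_1,v_1)\in R_1$ and $(v_1,v_2)\in B$; (d) for every cycle $\pi_1$ of $\mathcal K_1$ with first world $w_1$ there is a cycle $\pi_2$ of $\mathcal K_2$ with first world $w_2$ such that $((\pi_1)_i,(\pi_2)_i)\in B$ for all $i\in\mathbb N$; (e) for every cycle $\pi_2$ of $\mathcal K_2$ with first world $w_2$ there is a cycle $\pi_1$ of $\mathcal K_1$ with first world $w_1$ such that $((\pi_1)_i,(\pi_2)_i)\in B$ for all $i\in\mathbb N$. *)

(* Defs.v *)
From Stdlib Require Import Arith List.

Definition FiniteT (T : Type) : Prop := exists l : list T, forall x : T, In x l.
Definition CountableT (T : Type) : Prop :=
  exists f : T -> nat, forall x y, f x = f y -> x = y.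

(* Kripke structure over AP; a label L w is the subset {p | L w p = true} of AP. *)
Record Kripke (AP : Type) := mkKripke {
  World : Type;
  R : World -> World -> Prop;
  L : World -> AP -> bool;
  wI : World;
  world_countable : CountableT World;
  R_total : forall w, exists v, R w v
}.

Arguments World {AP} k.
Arguments R {AP} k _ _.
Arguments L {AP} k _ _.
Arguments wI {AP} k.

Definition path {AP} (K : Kripke AP) := nat -> World K.

Definition is_path {AP} (K : Kripke AP) (pi : path K) : Prop :=
  forall i, R K (pi i) (pi (S i)).

Definition Pth {AP} (K : Kripke AP) (w : World K) (pi : path K) : Prop :=
  is_path K pi /\ pi 0 = w.

Definition is_cycle {AP} (K : Kripke AP) (pi : path K) : Prop :=
  is_path K pi /\ forall i, exists j, j > i /\ pi j = pi 0.

Definition Cyc {AP} (K : Kripke AP) (w : World K) (pi : path K) : Prop :=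
  is_cycle K pi /\ pi 0 = w.

Inductive sform (AP : Type) : Type :=
| SAtom : AP -> sform AP
| SNot : sform AP -> sform AP
| SAnd : sform AP -> sform AP -> sform AP
| SOr : sform AP -> sform AP -> sform AP
| SE : pform AP -> sform AP
| SA : pform AP -> sform AP
| SEc : pform AP -> sform AP
| SAc : pform AP -> sform AP
with pform (AP : Type) : Type :=
| PState : sform AP -> pform AP
| PNot : pform AP -> pform AP
| PAnd : pform AP -> pform AP -> pform AP
| POr : pform AP -> pform AP -> pform AP
| PX : pform AP -> pform AP
| PU : pform AP -> pform AP -> pform AP.

Arguments SAtom {AP} _.
Arguments SNot {AP} _.
Arguments SAnd {AP} _ _.
Arguments SOr {AP} _ _.
Arguments SE {AP} _.
Arguments SA {AP} _.
Arguments SEc {AP} _.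
Arguments SAc {AP} _.
Arguments PState {AP} _.
Arguments PNot {AP} _.
Arguments PAnd {AP} _ _.
Arguments POr {AP} _ _.
Arguments PX {AP} _.
Arguments PU {AP} _ _.

Fixpoint sat_s {AP} (K : Kripke AP) (w : World K) (phi : sform AP) : Prop :=
  match phi with
  | SAtom p => L K w p = true
  | SNot f => ~ sat_s K w f
  | SAnd f g => sat_s K w f /\ sat_s K w g
  | SOr f g => sat_s K w f \/ sat_s K w g
  | SE psi => exists pi, Pth K w pi /\ sat_p K pi 0 psi
  | SA psi => forall pi, Pth K w pi -> sat_p K pi 0 psi
  | SEc psi => exists pi, Cyc K w pi /\ sat_p K pi 0 psi
  | SAc psi => forall pi, Cyc K w pi -> sat_p K pi 0 psi
  end
with sat_p {AP} (K : Kripke AP) (pi : path K) (i : nat) (psi : pform AP) : Prop :=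
  match psi with
  | PState f => sat_s K (pi i) f
  | PNot q => ~ sat_p K pi i q
  | PAnd q r => sat_p K pi i q /\ sat_p K pi i r
  | POr q r => sat_p K pi i q \/ sat_p K pi i r
  | PX q => sat_p K pi (S i) q
  | PU q r => exists k, sat_p K pi (i + k) r /\
                        forall j, j < k -> sat_p K pi (i + j) q
  end.

Definition models {AP} (K : Kripke AP) (phi : sform AP) : Prop := sat_s K (wI K) phi.

Definition cycle_bisim {AP} (K1 K2 : Kripke AP)
  (B : World K1 -> World K2 -> Prop) : Prop :=
  B (wI K1) (wI K2) /\
  forall w1 w2, B w1 w2 ->
    L K1 w1 = L K2 w2 /\
    (forall v1, R K1 w1 v1 -> exists v2, R K2 w2 v2 /\ B v1 v2) /\
    (forall v2, R K2 w2 v2 -> exists v1, R K1 w1 v1 /\ B v1 v2) /\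
    (forall pi1, Cyc K1 w1 pi1 ->
       exists pi2, Cyc K2 w2 pi2 /\ forall i, B (pi1 i) (pi2 i)) /\
    (forall pi2, Cyc K2 w2 pi2 ->
       exists pi1, Cyc K1 w1 pi1 /\ forall i, B (pi1 i) (pi2 i)).

(* Main.v *)
Require Import Defs.
From Stdlib Require Import ClassicalEpsilon.

Section PM.
Context {AP : Type} (K1 K2 : Kripke AP) (B : World K1 -> World K2 -> Prop)
  (Hf : forall w1 w2, B w1 w2 -> forall v1, R K1 w1 v1 -> exists v2, R K2 w2 v2 /\ B v1 v2).

Lemma path_match (pi1 : path K1) (Hp : is_path K1 pi1) (w2 : World K2) (Hb : B (pi1 0) w2) :
  exists pi2 : path K2, Pth K2 w2 pi2 /\ forall i, B (pi1 i) (pi2 i).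
Proof.
  pose (step := fun n (x : {v | B (pi1 n) v}) =>
     constructive_indefinite_description _ (Hf _ _ (proj2_sig x) _ (Hp n))).
  pose (sq := nat_rect (fun n => {v | B (pi1 n) v}) (exist _ w2 Hb)
     (fun n x => exist _ (proj1_sig (step n x)) (proj2 (proj2_sig (step n x))))).
  exists (fun n => proj1_sig (sq n)). split; [split|].
  - intro i. simpl. exact (proj1 (proj2_sig (step i (sq i)))).
  - reflexivity.
  - intro i. exact (proj2_sig (sq i)).
Qed.
End PM.

Scheme sform_ind2 := Induction for sform Sort Prop
with pform_ind2 := Induction for pform Sort Prop.
Combined Scheme form_ind from sform_ind2, pform_ind2.

Theorem mainTheorem2 (AP : Type) (HAP : FiniteT AP) (K1 K2 : Kripke AP)
  (B : World K1 -> World K2 -> Prop) :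
  cycle_bisim K1 K2 B ->
  (forall (phi : sform AP) (w1 : World K1) (w2 : World K2),
      B w1 w2 -> (sat_s K1 w1 phi <-> sat_s K2 w2 phi)) /\
  (forall phi : sform AP, models K1 phi <-> models K2 phi).
Proof.
  intros [HI HB].
  assert (Hf : forall w1 w2, B w1 w2 -> forall v1, R K1 w1 v1 -> exists v2, R K2 w2 v2 /\ B v1 v2)
    by (intros; apply (HB _ _ H); auto).
  assert (Hb : forall w2 w1, (fun a b => B b a) w2 w1 -> forall v2, R K2 w2 v2 ->
     exists v1, R K1 w1 v1 /\ (fun a b => B b a) v2 v1)
    by (intros w2 w1 H v2 Hv; destruct (HB _ _ H) as (_&_&H3&_); destruct (H3 v2 Hv) as (v1&?&?); eauto).
  assert (M : (forall phi w1 w2, B w1 w2 -> (sat_s K1 w1 phi <-> sat_s K2 w2 phi)) /\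
              (forall psi pi1 pi2, (forall i, B (pi1 i) (pi2 i)) ->
                 forall i, sat_p K1 pi1 i psi <-> sat_p K2 pi2 i psi)).
  { apply form_ind; simpl; intros.
    - destruct (HB _ _ H) as (HL&_). rewrite HL. tauto.
    - rewrite (H w1 w2 H0). tauto.
    - rewrite (H w1 w2 H1), (H0 w1 w2 H1). tauto.
    - rewrite (H w1 w2 H1), (H0 w1 w2 H1). tauto.
    - split.
      + intros (pi1&[Hp H0']&Hs). subst w1.
        destruct (path_match K1 K2 B Hf pi1 Hp w2 H0) as (pi2&Hp2&HBi).
        exists pi2. split; auto. apply (proj1 (H pi1 pi2 HBi 0)); auto.
      + intros (pi2&[Hp H0']&Hs). subst w2.
        destruct (path_match K2 K1 _ Hb pi2 Hp w1 H0) as (pi1&Hp1&HBi).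
        exists pi1. split; auto. apply (proj2 (H pi1 pi2 HBi 0)); auto.
    - split.
      + intros Hall pi2 [Hp H0']. subst w2.
        destruct (path_match K2 K1 _ Hb pi2 Hp w1 H0) as (pi1&Hp1&HBi).
        apply (proj1 (H pi1 pi2 HBi 0)); auto.
      + intros Hall pi1 [Hp H0']. subst w1.
        destruct (path_match K1 K2 B Hf pi1 Hp w2 H0) as (pi2&Hp2&HBi).
        apply (proj2 (H pi1 pi2 HBi 0)); auto.
    - destruct (HB _ _ H0) as (_&_&_&C1&C2). split.
      + intros (pi1&Hc&Hs). destruct (C1 pi1 Hc) as (pi2&Hc2&HBi).
        exists pi2. split; auto. apply (proj1 (H pi1 pi2 HBi 0)); auto.
      + intros (pi2&Hc&Hs). destruct (C2 pi2 Hc) as (pi1&Hc1&HBi).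
        exists pi1. split; auto. apply (proj2 (H pi1 pi2 HBi 0)); auto.
    - destruct (HB _ _ H0) as (_&_&_&C1&C2). split.
      + intros Hall pi2 Hc. destruct (C2 pi2 Hc) as (pi1&Hc1&HBi).
        apply (proj1 (H pi1 pi2 HBi 0)); auto.
      + intros Hall pi1 Hc. destruct (C1 pi1 Hc) as (pi2&Hc2&HBi).
        apply (proj2 (H pi1 pi2 HBi 0)); auto.
    - apply H. auto.
    - rewrite (H pi1 pi2 H0 i). tauto.
    - rewrite (H pi1 pi2 H1 i), (H0 pi1 pi2 H1 i). tauto.
    - rewrite (H pi1 pi2 H1 i), (H0 pi1 pi2 H1 i). tauto.
    - apply H; auto.
    - split; intros (k&Hk&Hj); exists k; split.
      + apply (H0 pi1 pi2 H1); auto.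
      + intros j Hjk. apply (H pi1 pi2 H1); auto.
      + apply (H0 pi1 pi2 H1); auto.
      + intros j Hjk. apply (H pi1 pi2 H1); auto. }
  split; [exact (proj1 M)|]. intro phi. unfold models. apply (proj1 M). exact HI.
Qed.
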